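(* For any $q\in(1,2)$, with conjugate exponent $p=q/(q-1)$, any $d$ and any $\varepsilon>0$, the $\ell_q$ mean estimation problem in $\mathbb R^d$ can be solved with error $\varepsilon$ by a statistical query algorithm using $2d\log d$ queries to $\mathrm{VSTAT}_D\big((16\log(d)/\varepsilon)^p\big)$.
   Context: For a distribution $D$ over a domain $\mathcal W$ and $n>0$, the oracle $\mathrm{VSTAT}_D(n)$, given any $\phi:\mathcal W\to[0,1]$, returns some value $v$ with $|v-p_\phi|\le\max\{1/n,\sqrt{p_\phi(1-p_\phi)/n}\}$, where $p_\phi=\mathbb E_{\mathbf w\sim D}[\phi(\mathbf w)]$; a statistical query algorithm accesses $D$ only through such calls. The $\ell_q$ mean estimation problem with error $\varepsilon$: given such oracle access to an unknown distribution $D$ supported on the unit $\ell_q$ ball $\mathcal B_q^d$, output $\tilde w\in\mathbb R^d$ with $\|\tilde w-\mathbb E_{\mathbf w\sim D}[\mathbf w]\|_q\le\varepsilon$. *)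

(* Defs.v *)
From mathcomp Require Import all_boot all_order all_algebra.
From mathcomp Require Import all_classical all_reals all_analysis.
Set Implicit Arguments. Unset Strict Implicit. Unset Printing Implicit Defensive.
Import Order.TTheory GRing.Theory Num.Theory.
Local Open Scope ring_scope.
Local Open Scope classical_set_scope.

Definition lqnorm {R : realType} {d : nat} (q : R) (w : 'rV[R]_d) : R :=
  (\sum_(i < d) `|w ord0 i| `^ q) `^ q^-1.

Definition conj_exp {R : realType} (q : R) : R := q / (q - 1).

Definition log2 {R : realType} (x : R) : R := ln x / ln 2.

(* A distribution D over R^d is represented as the law of a random vector
   X : T -> 'rV[R]_d on a probability space (T, P) with measurable coordinates. *)
Definition rvec_measurable {dT : measure_display} {T : measurableType dT}
  {R : realType} {d : nat} (X : T -> 'rV[R]_d) : Prop :=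
  forall i : 'I_d, measurable_fun setT (fun t => X t ord0 i).

Definition qexp {dT : measure_display} {T : measurableType dT} {R : realType}
  {d : nat} (P : probability T R) (X : T -> 'rV[R]_d) (phi : 'rV[R]_d -> R) : R :=
  fine (\int[P]_t (phi (X t))%:E)%E.

Definition mean_vec {dT : measure_display} {T : measurableType dT} {R : realType}
  {d : nat} (P : probability T R) (X : T -> 'rV[R]_d) : 'rV[R]_d :=
  \row_(i < d) fine (\int[P]_t (X t ord0 i)%:E)%E.

Definition vstat_tol {R : realType} (n p : R) : R :=
  Num.max n^-1 (Num.sqrt (p * (1 - p) / n)).

(* A query phi : R^d -> R is Borel measurable in the sense that composing it
   with any random vector with measurable coordinates gives a measurable map. *)
Definition query_measurable {R : realType} {d : nat} (phi : 'rV[R]_d -> R) : Prop :=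
  forall (dT : measure_display) (T : measurableType dT) (X : T -> 'rV[R]_d),
    rvec_measurable X -> measurable_fun setT (phi \o X).

(* A deterministic, adaptive statistical query algorithm making k queries:
   the j-th query is chosen as a function of the j previous answers, and the
   output is a function of all k answers. *)
Record SQalg (R : realType) (d : nat) := {
  sq_query : nat -> seq R -> 'rV[R]_d -> R;
  sq_output : seq R -> 'rV[R]_d }.

Definition SQalg_wf {R : realType} {d : nat} (A : SQalg R d) : Prop :=
  forall (j : nat) (s : seq R),
    (forall w, 0 <= sq_query A j s w <= 1) /\ query_measurable (sq_query A j s).

(* a is a possible sequence of answers of VSTAT_D(n) to the k queries of A
   (the oracle may answer adversarially and adaptively). *)
Definition vstat_transcript {dT : measure_display} {T : measurableType dT}
  {R : realType} {d : nat} (P : probability T R) (X : T -> 'rV[R]_d)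
  (n : R) (A : SQalg R d) (k : nat) (a : seq R) : Prop :=
  size a = k /\
  forall j : nat, (j < k)%N ->
    let p := qexp P X (sq_query A j (take j a)) in
    `|nth 0 a j - p| <= vstat_tol n p.

(* Main.v *)
Require Import Defs.
From mathcomp Require Import all_boot all_order all_algebra.
From mathcomp Require Import all_classical all_reals all_analysis.
From mathcomp Require Import ring lra zify.
From Stdlib Require Import Lia.
Set Implicit Arguments. Unset Strict Implicit. Unset Printing Implicit Defensive.
Import Order.TTheory GRing.Theory Num.Theory.
Local Open Scope ring_scope.
Local Open Scope classical_set_scope.

Lemma conv2 (R:realType) (q t a b : R) : 1 <= q -> 0 <= t -> t <= 1 -> 0 <= a -> 0 <= b ->
  (t*a + (1-t)*b) `^ q <= t * a `^ q + (1-t) * b `^ q.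
Proof.
move=> q1 t0 t1 a0 b0.
have := @convex_powR R q q1 (Itv01 t0 t1) a b.
rewrite !inE /= !in_itv /= !andbT => /(_ a0 b0).
by rewrite !convRE /=.
Qed.

Lemma jensen_mean (R:realType) (q : R) (y : nat -> R) (m : nat) : 1 <= q ->
  (forall j, 0 <= y j) -> (0 < m)%N ->
  ((\sum_(j < m) y j) / m%:R) `^ q <= (\sum_(j < m) (y j) `^ q) / m%:R.
Proof.
move=> q1 y0; elim: m => [//|m IH] _.
case: m IH => [|m] IH.
  by rewrite !big_ord1 !divr1.
have mp : (0 < m.+1)%N by [].
have {}IH := IH mp.
set S := \sum_(j < m.+1) y j; set Sq := \sum_(j < m.+1) y j `^ q.
rewrite [\sum_(j < m.+2) y j]big_ord_recr [\sum_(j < m.+2) y j `^ q]big_ord_recr /= -/S -/Sq.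
set t := (m.+1%:R : R) / m.+2%:R.
have m1 : (0 : R) < m.+1%:R by rewrite ltr0n.
have m2 : (0 : R) < m.+2%:R by rewrite ltr0n.
have t0 : 0 <= t by rewrite divr_ge0 // ltW.
have t1 : t <= 1 by rewrite ler_pdivrMr // mul1r ler_nat.
have e1 : 1 - t = m.+2%:R^-1.
  rewrite /t -(natr1 m.+1); field.
  by rewrite lt0r_neq0 // ltr_pwDr.
have S0 : 0 <= S by rewrite sumr_ge0.
have -> : (S + y m.+1) / m.+2%:R = t * (S / m.+1%:R) + (1 - t) * y m.+1.
  rewrite e1 /t; field.
  by rewrite !lt0r_neq0.
have a0 : 0 <= S / m.+1%:R by rewrite divr_ge0 // ltW.
apply: le_trans; first exact: (conv2 q1 t0 t1 a0 (y0 _)).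
rewrite e1 mulrDl [y _ `^ q / _]mulrC lerD2r /t.
rewrite -(@ler_pM2l _ ((m.+1%:R : R) / m.+2%:R)^-1) ?invr_gt0 ?divr_gt0 //.
rewrite mulrA mulVf ?mul1r ?lt0r_neq0 ?divr_gt0 //.
apply: le_trans IH _.
rewrite -/Sq.
have -> : ((m.+1%:R : R) / m.+2%:R)^-1 * (Sq / m.+2%:R) = Sq / m.+1%:R.
  by field; rewrite !lt0r_neq0.
by [].
Qed.

Lemma jensen_sum (R:realType) (q : R) (y : nat -> R) (m : nat) : 1 <= q ->
  (forall j, 0 <= y j) -> (0 < m)%N ->
  (\sum_(j < m) y j) `^ q <= m%:R `^ (q - 1) * \sum_(j < m) (y j) `^ q.
Proof.
move=> q1 y0 mp.
have m0 : (0:R) < m%:R by rewrite ltr0n.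
have q0 : 0 < q by apply: lt_le_trans q1.
have H := jensen_mean q1 y0 mp.
set S := \sum_(j < m) y j in H *; set Sq := \sum_(j < m) y j `^ q in H *.
have S0 : 0 <= S by rewrite sumr_ge0.
have eS : S = m%:R * (S / m%:R) by field; rewrite lt0r_neq0.
rewrite {1}eS powRM; last by rewrite divr_ge0 // ltW.
  2: exact: ltW.
apply: (@le_trans _ _ (m%:R `^ q * (Sq / m%:R))).
  by rewrite ler_pM2l ?powR_gt0.
rewrite -(mulr_powRB1 (ltW m0) q0).
rewrite le_eqVlt; apply/orP; left; apply/eqP; field; rewrite lt0r_neq0 //.
Qed.

Definition est (R : realType) (n v : R) : R := if 2 / n <= v then v else 0.

Lemma tol_le (R : realType) (n rho : R) : 0 < n -> 0 <= rho ->
  vstat_tol n rho <= Num.max n^-1 (Num.sqrt (rho * n^-1)).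
Proof.
move=> n0 r0.
have h : Num.sqrt (rho * (1 - rho) / n) <= Num.sqrt (rho * n^-1).
  rewrite ler_sqrt; last by rewrite mulr_ge0 // invr_ge0 ltW.
  rewrite ler_pM2r ?invr_gt0 //.
  by rewrite mulrBr mulr1 gerBl mulr_ge0.
rewrite /vstat_tol ge_max; apply/andP; split; rewrite le_max ?lexx ?h ?orbT //.
Qed.

Lemma sqrt_le (R : realType) (a b : R) : 0 <= b -> a <= b ^+ 2 -> Num.sqrt a <= b.
Proof.
move=> b0 h; rewrite -(ger0_norm b0) -sqrtr_sqr ler_sqrt //; exact: sqr_ge0.
Qed.

Lemma sqrt_ge (R : realType) (a b : R) : 0 <= b -> b ^+ 2 <= a -> b <= Num.sqrt a.
Proof.
move=> b0 h; rewrite -(ger0_norm b0) -sqrtr_sqr ler_sqrt //; apply: le_trans h; exact: sqr_ge0.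
Qed.

Lemma powR_le (R : realType) (r x y : R) : 0 <= r -> 0 <= x -> x <= y ->
  x `^ r <= y `^ r.
Proof.
move=> r0 x0 xy; apply: ge0_ler_powR => //; rewrite nnegrE //; exact: le_trans xy.
Qed.

Lemma pow_split (R : realType) (q x : R) : 0 < q -> 0 <= x ->
  x `^ q = x * x `^ (q - 1).
Proof. by move=> q0 x0; rewrite mulr_powRB1. Qed.

Lemma layer_err (R : realType) (q n rho v : R) : 1 <= q -> q <= 2 -> 0 < n ->
  0 <= rho -> `|v - rho| <= vstat_tol n rho ->
  `|est n v - rho| `^ q <= 4 * rho * n^-1 `^ (q - 1).
Proof.
move=> q1 q2 n0 r0 hv.
have q0 : 0 < q by apply: lt_le_trans q1.
have {}hv := le_trans hv (tol_le n0 r0).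
set nu := n^-1 in hv *.
have nu0 : 0 < nu by rewrite invr_gt0.
have e2 : 2 / n = 2 * nu by [].
have qm0 : 0 <= q - 1 by rewrite subr_ge0.
have P4 : 0 <= 4 * rho * nu `^ (q - 1) by rewrite !mulr_ge0 ?powR_ge0.
have base : forall x, 0 <= x -> x <= nu -> x `^ q <= x * nu `^ (q - 1).
  move=> x x0 xnu; rewrite (pow_split q0 x0) ler_wpM2l //.
  exact: powR_le.
rewrite /est e2; have [hle|hlt] := leP rho nu.
- have hT : `|v - rho| <= nu.
    apply: le_trans hv _; rewrite ge_max lexx /=.
    by apply: sqrt_le; [exact: ltW | rewrite expr2 ler_pM2r].
  case: ifP => hv2.
  + have rnu : nu <= rho.
      have : v - rho <= nu by apply: le_trans (ler_norm _) hT.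
      by lra.
    apply: le_trans (_ : nu `^ q <= _).
      by apply: powR_le => //; exact: ltW.
    rewrite (pow_split q0 (ltW nu0)).
    have : nu * nu `^ (q - 1) <= rho * nu `^ (q - 1) by rewrite ler_wpM2r ?powR_ge0.
    have := powR_ge0 nu (q - 1); nra.
  + rewrite sub0r normrN ger0_norm //.
    apply: le_trans (base _ r0 hle) _.
    have := powR_ge0 nu (q - 1); nra.
- have hT : `|v - rho| <= Num.sqrt (rho * nu).
    apply: le_trans hv _; rewrite ge_max lexx andbT.
    by apply: sqrt_ge; [exact: ltW | rewrite expr2 ler_pM2r // ltW].
  case: ifP => hv2.
  + set r := Num.sqrt (rho / nu).
    have r1 : 1 <= r.
      by apply: sqrt_ge => //; rewrite expr1n ler_pdivlMr // mul1r ltW.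
    have er : Num.sqrt (rho * nu) = nu * r.
      have e : (nu * r) ^+ 2 = rho * nu.
        rewrite exprMn /r sqr_sqrtr ?divr_ge0 //; last exact: ltW.
        by rewrite expr2; field; rewrite lt0r_neq0.
      rewrite -e sqrtr_sqr ger0_norm // mulr_ge0 //; first exact: ltW.
      exact: le_trans r1.
    apply: le_trans (_ : (nu * r) `^ q <= _).
      by apply: powR_le => //; [exact: ltW | rewrite -er].
    rewrite (powRM _ (ltW nu0) (le_trans ler01 r1)).
    have hr : r `^ q <= r `^ 2 by apply: ler_powR.
    have rr : r `^ 2 = rho / nu.
      by rewrite -[2]/(2%:R) powR_mulrn ?(le_trans _ r1) // sqr_sqrtr // divr_ge0 // ltW.
    rewrite rr in hr.
    apply: le_trans (_ : nu `^ q * (rho / nu) <= _).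
      by rewrite ler_wpM2l ?powR_ge0.
    rewrite (pow_split q0 (ltW nu0)).
    have -> : nu * nu `^ (q - 1) * (rho / nu) = rho * nu `^ (q - 1).
      by field; rewrite lt0r_neq0.
    have := powR_ge0 nu (q - 1); nra.
  + rewrite sub0r normrN ger0_norm //.
    have hr4 : rho <= 4 * nu.
      rewrite leNgt; apply/negP => h4.
      have hs : Num.sqrt (rho * nu) <= rho / 2.
        apply: sqrt_le; first by rewrite divr_ge0.
        have : 0 <= rho * (rho - 4 * nu) by rewrite mulr_ge0 // subr_ge0 ltW.
        rewrite expr2; nra.
      have : rho - v <= rho / 2 by apply: le_trans hs; apply: le_trans hT; rewrite distrC ler_norm.
      move/negbT: hv2; rewrite -ltNge => hv2'.
      by lra.
    rewrite pow_split //.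
    apply: le_trans (_ : rho * (4 * nu) `^ (q - 1) <= _).
      by rewrite ler_wpM2l //; apply: powR_le.
    rewrite (powRM _ _ (ltW nu0)) //.
    have : 4 `^ (q - 1) <= (4 : R) `^ 1 by rewrite ler_powR ?ler1n //; lra.
    rewrite powRr1 // => h4.
    have := powR_ge0 nu (q - 1); have := powR_ge0 4 (q - 1); nra.
Qed.

Ltac mm := rewrite ?minEle ?maxEle;
  repeat (match goal with |- context [if ?b then _ else _] =>
    lazymatch b with context [if _ then _ else _] => fail | _ => 
    let h := fresh "h" in case: (boolP b) => h end end);
  repeat match goal with H : is_true (~~ (_ <= _)) |- _ => rewrite -ltNge in H end.

Section Layers.
Context {R : realType} (F : nat).

Definition tau (j : nat) : R := (2^-1) ^+ j.
Definition hh (x : R) (j : nat) : R := if (j < F)%N then Num.min (Num.max x 0) (tau j) else 0.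
Definition piece (x : R) (j : nat) : R := hh x j - hh x j.+1.
Definition Delta (j : nat) : R := if (j.+1 < F)%N then tau j.+1 else tau j.

Lemma tau_gt0 j : 0 < tau j.
Proof. by rewrite /tau exprn_gt0 // invr_gt0. Qed.

Lemma tauS j : tau j.+1 = tau j / 2.
Proof. by rewrite /tau exprS mulrC. Qed.

Lemma Delta_gt0 j : 0 < Delta j.
Proof. by rewrite /Delta; case: ifP => _; exact: tau_gt0. Qed.

Lemma piece_ge0 x j : 0 <= piece x j.
Proof.
rewrite /piece /hh; have t0 := tau_gt0 j; have tS := tauS j.
case: ifP => hj; case: ifP => hj1; try lia.
all: by mm; lra.
Qed.

Lemma piece_le x j : piece x j <= Delta j.
Proof.
rewrite /piece /hh /Delta; have t0 := tau_gt0 j; have tS := tauS j.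
case: ifP => hj; case: ifP => hj1; try lia.
all: by mm; lra.
Qed.

Lemma piece_npos x j : x <= 0 -> piece x j = 0.
Proof.
move=> x0; rewrite /piece /hh; have t0 := tau_gt0 j; have t1 := tau_gt0 j.+1.
case: ifP => hj; case: ifP => hj1; try lia.
all: by mm; lra.
Qed.

Lemma piece_small x j : (j.+1 < F)%N -> x <= tau j.+1 -> piece x j = 0.
Proof.
move=> hj1 x0; rewrite /piece /hh hj1 (ltn_trans (ltnSn j) hj1).
have t0 := tau_gt0 j; have tS := tauS j.
by mm; lra.
Qed.

Lemma sum_piece x : (0 < F)%N -> \sum_(j < F) piece x j = Num.min (Num.max x 0) 1.
Proof.
move=> F0.
have := @telescope_sumr _ 0 F (fun j => - hh x j) (leq0n F).
rewrite big_mkord /piece.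
under eq_bigr do rewrite opprK addrC.
move=> ->; rewrite /hh ltnn F0 /tau expr0; lra.
Qed.

End Layers.

Section Queries.
Context {R : realType} {d : nat} (F : nat).

Definition sgn (s : bool) : R := if s then -1 else 1.
Definition phi (j : nat) (s : bool) (i : 'I_d) (w : 'rV[R]_d) : R :=
  piece F (sgn s * w ord0 i) j / Delta F j.

Lemma phi_ge0 j s i (w : 'rV[R]_d) : 0 <= phi j s i w.
Proof. by rewrite /phi divr_ge0 ?piece_ge0 // ltW // Delta_gt0. Qed.

Lemma phi_le1 j s i (w : 'rV[R]_d) : phi j s i w <= 1.
Proof. by rewrite /phi ler_pdivrMr ?Delta_gt0 // mul1r piece_le. Qed.

Lemma phi_recon i (w : 'rV[R]_d) : (0 < F)%N -> `|w ord0 i| <= 1 ->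
  \sum_(j < F) Delta F j * (phi j false i w - phi j true i w) = w ord0 i.
Proof.
move=> F0 hx.
have e : forall j, Delta F j * (phi j false i w - phi j true i w) =
   piece F (sgn false * w ord0 i) j - piece F (sgn true * w ord0 i) j.
  move=> j; rewrite /phi mulrBr !(mulrC (Delta F j)) !divfK //; exact: lt0r_neq0 (Delta_gt0 F j).
under eq_bigr do rewrite e.
rewrite sumrB !sum_piece // /sgn mulN1r mul1r.
move: hx; set x := w ord0 i => hx.
have : -1 <= x <= 1 by rewrite -ler_norml.
by move=> /andP[]; mm; lra.
Qed.

Lemma phi_pair_le1 j i (w : 'rV[R]_d) : phi j false i w + phi j true i w <= 1.
Proof.
rewrite /phi /sgn mulN1r mul1r.
have [x0|x0] := leP (w ord0 i) 0.
- rewrite (piece_npos F j x0) mul0r add0r.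
  by rewrite ler_pdivrMr ?Delta_gt0 // mul1r piece_le.
- rewrite (@piece_npos _ F (- w ord0 i) j) ?mul0r ?addr0; last by rewrite oppr_le0 ltW.
  by rewrite ler_pdivrMr ?Delta_gt0 // mul1r piece_le.
Qed.

Lemma phi_K j i (w : 'rV[R]_d) (q : R) : 0 <= q ->
  phi j false i w + phi j true i w <=
  (if (j.+1 < F)%N then (`|w ord0 i| * (tau j.+1)^-1) `^ q else 1).
Proof.
move=> q0; case: ifP => hj; last exact: phi_pair_le1.
have t0 := tau_gt0 j.+1.
have [hs|hl] := leP `|w ord0 i| (tau j.+1).
- rewrite /phi /sgn mulN1r mul1r !piece_small //.
  + by rewrite mul0r addr0 powR_ge0.
  + by apply: le_trans hs; rewrite -normrN ler_norm.
  + by apply: le_trans hs; rewrite ler_norm.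
- apply: le_trans (phi_pair_le1 j i w) _.
  rewrite -(powRr0 (`|w ord0 i| * (tau j.+1)^-1)); apply: ler_powR => //.
  rewrite ler_pdivlMr; [rewrite mul1r; exact: ltW | exact: t0].
Qed.

End Queries.

Section Weights.
Context {R : realType} {d : nat} (F : nat) (q : R).

Definition W (j : nat) : R := if (j.+1 < F)%N then ((tau j.+1)^-1) `^ q else d%:R.

Lemma sum_phi j (w : 'rV[R]_d) : 0 <= q -> \sum_(i < d) `|w ord0 i| `^ q <= 1 ->
  \sum_(i < d) (phi F j false i w + phi F j true i w) <= W j.
Proof.
move=> q0 hw; rewrite /W.
apply: le_trans (ler_sum _ (fun i _ => phi_K F j i w q0)) _.
case: ifP => hj.
- have t0 := tau_gt0 (R := R) j.+1.
  have ti : 0 <= (tau (R := R) j.+1)^-1 by rewrite invr_ge0 ltW.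
  under eq_bigr => i _ do rewrite (powRM _ (normr_ge0 _) ti).
  rewrite -mulr_suml.
  have := powR_ge0 ((tau (R := R) j.+1)^-1) q; nra.
- by rewrite sumr_const card_ord.
Qed.

Lemma weights : 1 <= q -> (0 < F)%N -> (d < 2 ^ F.+1)%N ->
  \sum_(j < F) Delta F j `^ q * W j <= F%:R + 3.
Proof.
move=> q1 F0 dF.
have q0 : 0 <= q by apply: le_trans q1.
have eF : F = F.-1.+1 by rewrite prednK.
move: dF; rewrite eF; set F' := F.-1 => dF.
rewrite big_ord_recr /=.
have -> : \sum_(j < F') Delta F'.+1 j `^ q * W j = \sum_(j < F') 1.
  apply: eq_bigr => j _.
  have t0 := tau_gt0 (R := R) j.+1.
  rewrite /W /Delta eF ltnS ltn_ord /= -powRM; last by rewrite invr_ge0 ltW.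
    by rewrite mulfV ?lt0r_neq0 // powR1.
  exact: ltW.
rewrite sumr_const card_ord /W /Delta eF ltnn.
have t0 := tau_gt0 (R := R) F'.
have t1 : tau (R := R) F' <= 1 by rewrite /tau exprn_ile1 // ?invr_ge0 // invf_le1 ?ler1n.
have h1 : tau F' `^ q <= tau (R := R) F' by apply: ge1r_powR => //; rewrite t0.
have h2 : tau (R := R) F' * d%:R <= 4.
  have : (d%:R : R) <= (2 ^ F'.+2)%:R by rewrite ler_nat ltnW.
  rewrite natrX /tau exprVn => h.
  rewrite ler_pdivrMl ?exprn_gt0 //.
  by rewrite !exprS mulrA in h *; lra.
have hd : (0 : R) <= d%:R by [].
rewrite -[F'.+1%:R]natr1.
have := powR_ge0 (tau (R := R) F') q; nra.
Qed.

End Weights.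

Lemma query_meas_phi {R : realType} {d : nat} (F j : nat) (s : bool) (i : 'I_d) :
  query_measurable (phi (R := R) F j s i).
Proof.
move=> dT T X hX.
have hx : measurable_fun setT (fun t => sgn (R := R) s * X t ord0 i).
  by apply: measurable_realfun.measurable_funM => //; exact: measurable_cst.
have hh' : forall k, measurable_fun setT (fun t => hh F (sgn (R := R) s * X t ord0 i) k).
  move=> k; unfold hh; case: (ltnP k F) => _ /=; last exact: measurable_cst.
  apply: measurable_realfun.measurable_minr; last exact: measurable_cst.
  by apply: measurable_realfun.measurable_maxr => //; exact: measurable_cst.
rewrite /comp /phi /piece.
apply: measurable_realfun.measurable_funM; last exact: measurable_cst.
exact: measurable_realfun.measurable_funB.
Qed.

Section Integ.
Context {R : realType} {dT : measure_display} {T : measurableType dT}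
  (P : probability T R).

Lemma integrable_bnd (f : T -> R) (B : R) : measurable_fun setT f ->
  (forall t, `|f t| <= B) -> P.-integrable setT (EFin \o f).
Proof.
move=> mf hB; apply: measurable_bounded_integrable => //.
  apply: (le_lt_trans (probability_le1 P measurableT)); exact: ltry.
exists B; split; first by rewrite num_real.
move=> M BM x _ /=; apply: le_trans (hB x) (ltW BM).
Qed.

Lemma Rintegral_sum (I : Type) (s : seq I) (f : I -> T -> R) :
  (forall k, P.-integrable setT (EFin \o f k)) ->
  P.-integrable setT (EFin \o (fun t => \sum_(k <- s) f k t)) /\
  \int[P]_(t in setT) (\sum_(k <- s) f k t) = \sum_(k <- s) \int[P]_(t in setT) f k t.
Proof.
move=> hf; elim: s => [|a s [IHi IHe]].
  split.
    under [X in _.-integrable _ X]eq_fun do rewrite big_nil.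
    exact: (finite_measure_integrable_cst P 0 measurableT).
  under eq_Rintegral do rewrite big_nil.
  by rewrite Rintegral_cst // mul0r big_nil.
have e : (EFin \o (fun t => \sum_(k <- a :: s) f k t)) =
    (EFin \o f a) \+ (EFin \o (fun t => \sum_(k <- s) f k t)).
  by apply: funext => t /=; rewrite big_cons.
split; first by rewrite e; exact: integrableD.
under eq_Rintegral do rewrite big_cons.
by rewrite RintegralD // IHe big_cons.
Qed.

End Integ.

Lemma lq_sum_le1 {R : realType} {d : nat} (q : R) (w : 'rV[R]_d) : 0 < q ->
  lqnorm q w <= 1 -> \sum_(i < d) `|w ord0 i| `^ q <= 1.
Proof.
move=> q0; rewrite /lqnorm => h.
have S0 : 0 <= \sum_(i < d) `|w ord0 i| `^ q by rewrite sumr_ge0 // => i _; exact: powR_ge0.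
have := powR_le (ltW q0) (powR_ge0 _ _) h.
by rewrite -powRrM mulVf ?lt0r_neq0 // powRr1 // powR1.
Qed.

Lemma coord_le1 {R : realType} {d : nat} (q : R) (w : 'rV[R]_d) i : 0 < q ->
  lqnorm q w <= 1 -> `|w ord0 i| <= 1.
Proof.
move=> q0 h; have := lq_sum_le1 q0 h.
have : `|w ord0 i| `^ q <= \sum_(i < d) `|w ord0 i| `^ q.
  rewrite (bigD1 i) //= lerDl sumr_ge0 // => k _; exact: powR_ge0.
move=> h1 h2; have h3 := le_trans h1 h2.
have qi : 0 < q^-1 by rewrite invr_gt0.
have := powR_le (ltW qi) (powR_ge0 _ _) h3.
by rewrite -powRrM mulfV ?lt0r_neq0 // powRr1 // powR1.
Qed.

Lemma integrable_scale {R : realType} {dT : measure_display} {T : measurableType dT}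
  (P : probability T R) (f : T -> R) (k : R) :
  P.-integrable setT (EFin \o f) -> P.-integrable setT (EFin \o (fun t => k * f t)).
Proof.
move=> h; have -> : EFin \o (fun t => k * f t) = (fun t => k%:E * (EFin \o f) t)%E.
  by apply: funext => t /=; rewrite EFinM.
exact: integrableZl.
Qed.

Lemma integrable_sub {R : realType} {dT : measure_display} {T : measurableType dT}
  (P : probability T R) (f g : T -> R) :
  P.-integrable setT (EFin \o f) -> P.-integrable setT (EFin \o g) ->
  P.-integrable setT (EFin \o (fun t => f t - g t)).
Proof.
move=> hf hg; have -> : EFin \o (fun t => f t - g t) = ((EFin \o f) \- (EFin \o g))%E.
  by apply: funext => t /=; rewrite EFinB.
exact: integrableB.
Qed.

Lemma integrable_add {R : realType} {dT : measure_display} {T : measurableType dT}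
  (P : probability T R) (f g : T -> R) :
  P.-integrable setT (EFin \o f) -> P.-integrable setT (EFin \o g) ->
  P.-integrable setT (EFin \o (fun t => f t + g t)).
Proof.
move=> hf hg; have -> : EFin \o (fun t => f t + g t) = ((EFin \o f) \+ (EFin \o g))%E.
  by apply: funext => t /=; rewrite EFinD.
exact: integrableD.
Qed.

Section Analytic.
Context {R : realType} {dT : measure_display} {T : measurableType dT}
  (P : probability T R) {d : nat} (X : T -> 'rV[R]_d) (F : nat).
Hypothesis hX : rvec_measurable X.

Lemma integ_phi j s i : P.-integrable setT (EFin \o (phi (R := R) F j s i \o X)).
Proof.
apply: (@integrable_bnd R dT T P _ 1 (@query_meas_phi R d F j s i dT T X hX)) => t.
by rewrite /= ger0_norm ?phi_ge0 ?phi_le1.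
Qed.

Lemma rho_ge0 j s i : 0 <= qexp P X (phi F j s i).
Proof. by apply: Rintegral_ge0 => t _; exact: phi_ge0. Qed.

Lemma mean_recon (q : R) i : 0 < q -> (forall t, lqnorm q (X t) <= 1) -> (0 < F)%N ->
  mean_vec P X ord0 i =
  \sum_(j < F) Delta F j * (qexp P X (phi F j false i) - qexp P X (phi F j true i)).
Proof.
move=> q0 hb F0.
have hint : forall j : 'I_F, P.-integrable setT
   (EFin \o (fun t => Delta F j * (phi F j false i (X t) - phi F j true i (X t)))).
  move=> j; apply: integrable_scale; apply: integrable_sub;
    [exact: (integ_phi j false i)|exact: (integ_phi j true i)].
have [_ hs] := Rintegral_sum (index_enum 'I_F) hint.
rewrite /qexp.
have e : forall j : 'I_F, Delta F j * (fine (\int[P]_t (phi F j false i (X t))%:E)%E -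
      fine (\int[P]_t (phi F j true i (X t))%:E)%E) =
   \int[P]_(t in setT) (Delta F j * (phi F j false i (X t) - phi F j true i (X t))).
  move=> j; rewrite RintegralZl //; last first.
    by apply: integrable_sub; [exact: (integ_phi j false i)|exact: (integ_phi j true i)].
  by rewrite RintegralB //; [exact: (integ_phi j false i)|exact: (integ_phi j true i)].
under eq_bigr => j _ do rewrite e.
rewrite -hs /mean_vec mxE.
apply: eq_Rintegral => t _.
by rewrite phi_recon // (coord_le1 _ q0 (hb t)).
Qed.

Lemma sum_rho (q : R) j : 0 < q -> (forall t, lqnorm q (X t) <= 1) ->
  \sum_(i < d) (qexp P X (phi F j false i) + qexp P X (phi F j true i)) <= W (d := d) F q j.
Proof.
move=> q0 hb.
have hint : forall i : 'I_d, P.-integrable setT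
   (EFin \o (fun t => phi F j false i (X t) + phi F j true i (X t))).
  move=> i; apply: integrable_add;
    [exact: (integ_phi j false i)|exact: (integ_phi j true i)].
have [hi hs] := Rintegral_sum (index_enum 'I_d) hint.
rewrite /qexp.
have e : forall i : 'I_d, fine (\int[P]_t (phi F j false i (X t))%:E)%E +
      fine (\int[P]_t (phi F j true i (X t))%:E)%E =
   \int[P]_(t in setT) (phi F j false i (X t) + phi F j true i (X t)).
  move=> i; rewrite RintegralD //; [exact: (integ_phi j false i)|exact: (integ_phi j true i)].
under eq_bigr => i _ do rewrite e.
rewrite -hs.
apply: le_trans (_ : \int[P]_(t in setT) (W (d := d) F q j) <= _).
  apply: le_Rintegral => //.
    exact: (finite_measure_integrable_cst P _ measurableT).
  move=> t _; apply: sum_phi; first exact: ltW.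
  exact: lq_sum_le1 q0 (hb t).
rewrite Rintegral_cst //. have hP : fine (P setT) = 1 :> R by rewrite probability_setT. rewrite hP mulr1 //.
Qed.

End Analytic.

Lemma combine {R : realType} (d F : nat) (q n : R) (v rho : 'I_d -> nat -> bool -> R) :
  1 <= q -> q <= 2 -> 0 < n -> (0 < F)%N -> (d < 2 ^ F.+1)%N ->
  (forall i j s, 0 <= rho i j s) ->
  (forall i j s, `|v i j s - rho i j s| <= vstat_tol n (rho i j s)) ->
  (forall j, \sum_(i < d) (rho i j false + rho i j true) <= W (d := d) F q j) ->
  \sum_(i < d) `| \sum_(j < F) Delta F j * ((est n (v i j false) - rho i j false)
       - (est n (v i j true) - rho i j true)) | `^ q
   <= F%:R `^ (q - 1) * (2 `^ (q - 1) * 4 * n^-1 `^ (q - 1)) * (F%:R + 3).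
Proof.
move=> q1 q2 n0 F0 dF r0 hv hW.
have q0 : 0 < q by apply: lt_le_trans q1.
set c := 2 `^ (q - 1) * 4 * n^-1 `^ (q - 1).
have c0 : 0 <= c by rewrite !mulr_ge0 ?powR_ge0.
set e := fun i j s => `|est n (v i j s) - rho i j s|.
have he : forall i j s, e i j s `^ q <= 4 * rho i j s * n^-1 `^ (q - 1).
  by move=> i j s; apply: layer_err.
set y := fun i (j : nat) => Delta F j * (e i j false + e i j true).
have y0 : forall i j, 0 <= y i j.
  move=> i j; apply: mulr_ge0; first exact: ltW (Delta_gt0 F j).
  by rewrite /e addr_ge0.
have hy : forall i j, y i j `^ q <= Delta F j `^ q * c * (rho i j false + rho i j true).
  move=> i j; rewrite /y powRM; [| exact: ltW (Delta_gt0 F j) | by rewrite /e addr_ge0].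
  rewrite -mulrA ler_wpM2l ?powR_ge0 //.
  set f := fun k : nat => if k == 0%N then e i j false else e i j true.
  have f0 : forall k, 0 <= f k by move=> k; rewrite /f /e; case: ifP => _; exact: normr_ge0.
  have := jensen_sum q1 f0 (isT : (0 < 2)%N).
  rewrite !big_ord_recr !big_ord0 /= !add0r /f /= => h.
  apply: le_trans h _; rewrite /c -!mulrA ler_wpM2l ?powR_ge0 //.
  have := he i j false; have := he i j true.
  have := powR_ge0 (n^-1) (q - 1); have := r0 i j false; have := r0 i j true.
  nra.
have hi : forall i : 'I_d, `| \sum_(j < F) Delta F j * ((est n (v i j false) - rho i j false)
       - (est n (v i j true) - rho i j true)) | `^ q
     <= F%:R `^ (q - 1) * \sum_(j < F) Delta F j `^ q * c * (rho i j false + rho i j true).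
  move=> i.
  apply: le_trans (_ : (\sum_(j < F) y i j) `^ q <= _).
    apply: powR_le; [exact: ltW | exact: normr_ge0 |].
    apply: le_trans (ler_norm_sum _ _ _) _; apply: ler_sum => j _.
    rewrite normrM (ger0_norm (ltW (Delta_gt0 F j))) /y.
    apply: ler_wpM2l; [exact: ltW (Delta_gt0 F j) | exact: ler_normB].
  apply: le_trans (jensen_sum q1 (y0 i) F0) _.
  rewrite ler_wpM2l ?powR_ge0 //; apply: ler_sum => j _; exact: hy.
apply: le_trans (ler_sum _ (fun i _ => hi i)) _.
rewrite -mulr_sumr -mulrA ler_wpM2l ?powR_ge0 //.
rewrite exchange_big /=.
apply: le_trans (_ : \sum_(j < F) Delta F j `^ q * c * W (d := d) F q j <= _).
  apply: ler_sum => j _; rewrite -mulr_sumr ler_wpM2l ?mulr_ge0 ?powR_ge0 //.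
have := weights (d := d) q1 F0 dF.
move=> h.
rewrite (eq_bigr (fun j : 'I_F => c * (Delta F j `^ q * W (d := d) F q j))); last first.
  by move=> j _; rewrite mulrAC mulrC.
by rewrite -mulr_sumr ler_wpM2l.
Qed.

Lemma const_bound {R : realType} (q eps L : R) (F : nat) : 1 < q -> q < 2 -> 0 < eps ->
  1 <= L -> (0 < F)%N -> F%:R <= L ->
  F%:R `^ (q - 1) * (2 `^ (q - 1) * 4 * ((16 * L / eps) `^ conj_exp q)^-1 `^ (q - 1))
    * (F%:R + 3) <= eps `^ q.
Proof.
move=> q1 q2 e0 L1 F0 FL.
have q0 : 0 < q by apply: lt_trans q1.
have L0 : 0 < L by apply: lt_le_trans L1.
set x := 16 * L / eps.
have x0 : 0 < x by rewrite /x divr_gt0 // mulr_gt0.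
have hq1 : q - 1 != 0 by rewrite subr_eq0 gt_eqF.
have ep : - conj_exp q * (q - 1) = - q.
  by rewrite /conj_exp mulNr divfK.
have hn : ((x `^ conj_exp q)^-1) `^ (q - 1) = (x `^ q)^-1.
  by rewrite -powRN -powRrM ep powRN.
rewrite hn.
have xq0 : 0 < x `^ q by apply: powR_gt0.
have exq : eps `^ q * x `^ q = 16 `^ q * L `^ q.
  rewrite -powRM ?ltW // /x mulrCA divff ?lt0r_neq0 // mulr1 powRM //; exact: ltW.
have F1 : (1 : R) <= F%:R by rewrite ler1n.
have hF : F%:R `^ (q - 1) <= L `^ (q - 1).
  by apply: powR_le => //; rewrite subr_ge0; exact: ltW.
have h2 : (2 : R) `^ (q - 1) <= 16 `^ (q - 1).
  by apply: powR_le; [rewrite subr_ge0; exact: ltW | lra | lra].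
have e16 : (16 : R) `^ q = 16 * 16 `^ (q - 1) by rewrite -mulr_powRB1.
have eL : L `^ q = L * L `^ (q - 1) by rewrite -mulr_powRB1 // ltW.
have p1 := powR_ge0 F%:R (q - 1); have p2 := powR_ge0 2 (q - 1).
have p3 := powR_ge0 L (q - 1); have p4 := powR_ge0 16 (q - 1).
rewrite -(ler_pM2r xq0).
have -> : F%:R `^ (q - 1) * (2 `^ (q - 1) * 4 * (x `^ q)^-1) * (F%:R + 3) * x `^ q
   = F%:R `^ (q - 1) * (2 `^ (q - 1) * 4) * (F%:R + 3).
  by field; rewrite lt0r_neq0.
rewrite exq e16 eL.
have hF3 : F%:R + 3 <= 4 * L by lra.
apply: le_trans (_ : L `^ (q - 1) * (16 `^ (q - 1) * 4) * (4 * L) <= _).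
  apply: ler_pM; [|lra| |exact: hF3].
  - by rewrite mulr_ge0 // mulr_ge0.
  - apply: ler_pM => //. all: try (by rewrite mulr_ge0). all: try (by apply: ler_pM => //; lra).
by rewrite le_eqVlt; apply/orP; left; apply/eqP; ring.
Qed.

Lemma log2_facts {R : realType} (d : nat) : (2 <= d)%N ->
  (0 < trunc_log 2 d)%N /\ (d < 2 ^ (trunc_log 2 d).+1)%N /\
  (trunc_log 2 d)%:R <= log2 (d%:R : R) /\ 1 <= log2 (d%:R : R).
Proof.
move=> hd; set F := trunc_log 2 d.
have F0 : (0 < F)%N by rewrite /F trunc_log_gt0.
have dF : (d < 2 ^ F.+1)%N by apply: trunc_log_ltn.
have Fd : (2 ^ F <= d)%N by apply: trunc_logP => //; lia.
have l2 : (0 : R) < ln 2 by apply: ln_gt0; lra.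
have FL : F%:R <= log2 (d%:R : R).
  rewrite /log2 ler_pdivlMr // mulrC mulr_natr -lnXn; last lra.
  rewrite ler_ln ?posrE ?exprn_gt0 ?ltr0n //; last lia.
  by rewrite -natrX ler_nat.
split => //; split => //; split => //.
by apply: le_trans FL; rewrite ler1n.
Qed.

Definition idx (F : nat) (i j : nat) (s : bool) : nat := ((i * F + j) * 2 + s)%N.

Definition qry {R : realType} {d : nat} (F : nat) (m : nat) (w : 'rV[R]_d) : R :=
  match (insub (m %/ 2 %/ F)%N : option 'I_d) with
  | Some i => phi F (m %/ 2 %% F)%N (m %% 2 == 1)%N i w
  | None => 0 end.

Definition outp {R : realType} {d : nat} (F : nat) (n : R) (a : seq R) : 'rV[R]_d :=
  \row_(i < d) \sum_(j < F) Delta F j *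
     (est n (nth 0 a (idx F i j false)) - est n (nth 0 a (idx F i j true))).

Lemma qry_idx {R : realType} {d : nat} (F : nat) (i : 'I_d) j s :
  (j < F)%N -> qry (R := R) F (idx F i j s) = phi F j s i.
Proof.
move=> jF; rewrite /qry /idx.
have e1 : (((i * F + j) * 2 + s) %/ 2 = i * F + j)%N.
  by rewrite divnMDl // divn_small ?addn0 //; case: s.
have e2 : (((i * F + j) * 2 + s) %% 2 == 1)%N = s.
  by rewrite modnMDl modn_small; case: (s) .
rewrite e1 e2 divnMDl ?(leq_ltn_trans _ jF) // divn_small // addn0 modnMDl modn_small //.
by rewrite valK.
Qed.

Unset Implicit Arguments.

Theorem theorem3p15 (R : realType) (q : R) (d : nat) (eps : R) :
  1 < q -> q < 2 -> (2 <= d)%N -> 0 < eps ->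
  exists (k : nat) (A : SQalg R d),
    k%:R <= 2 * d%:R * log2 (d%:R : R) /\
    SQalg_wf A /\
    forall (dT : measure_display) (T : measurableType dT)
           (P : probability T R) (X : T -> 'rV[R]_d),
      rvec_measurable X ->
      (forall t, lqnorm q (X t) <= 1) ->
      forall a : seq R,
        vstat_transcript P X ((16 * log2 (d%:R : R) / eps) `^ (conj_exp q)) A k a ->
        lqnorm q (sq_output A a - mean_vec P X) <= eps.
Proof.
move=> q1 q2 hd e0.
have q0 : 0 < q by apply: lt_trans q1.
have [F0 [dF [FL L1]]] := log2_facts (R := R) hd.
set F := trunc_log 2 d in F0 dF FL.
set L := log2 (d%:R : R) in FL L1 *.
set n := (16 * L / eps) `^ conj_exp q.
have n0 : 0 < n by apply: powR_gt0; rewrite divr_gt0 // mulr_gt0 //; lra.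
exists (2 * d * F)%N.
exists {| sq_query := fun m (_ : seq R) => qry (R := R) (d := d) F m;
          sq_output := outp (d := d) F n |}.
split.
  rewrite !natrM ler_pM2l //; last by rewrite mulr_gt0 // ltr0n; lia.
split.
  move=> m s /=; rewrite /qry.
  case: insubP => [i _ _|_].
    split; first by move=> w; rewrite phi_ge0 phi_le1.
    exact: query_meas_phi.
  split; first by move=> w; rewrite lexx ler01.
  by move=> dT T X hX; exact: measurable_cst.
move=> dT T P X hX hb a [ha hv] /=.
set rho := fun (i : 'I_d) (j : nat) (s : bool) => qexp P X (phi F j s i).
set v := fun (i : 'I_d) (j : nat) (s : bool) =>
   if (j < F)%N then nth 0 a (idx F i j s) else rho i j s.
have hv' : forall i j s, `|v i j s - rho i j s| <= vstat_tol n (rho i j s).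
  move=> i j s; rewrite /v; case: ifP => jF.
    have hk : (idx F i j s < 2 * d * F)%N.
      rewrite /idx; have := ltn_ord i; case: s => /=; nia.
    by have := hv _ hk; rewrite /= qry_idx.
  rewrite subrr normr0 /vstat_tol le_max; apply/orP; left.
  by rewrite invr_ge0 ltW.
have r0 : forall i j s, 0 <= rho i j s by move=> i j s; exact: rho_ge0.
have hW : forall j, \sum_(i < d) (rho i j false + rho i j true) <= W (d := d) F q j.
  by move=> j; exact: sum_rho.
have hc := combine (ltW q1) (ltW q2) n0 F0 dF r0 hv' hW.
have hcb := const_bound q1 q2 e0 L1 F0 FL.
have E : forall i, (outp F n a - mean_vec P X) ord0 i =
    \sum_(j < F) Delta F j * ((est n (v i j false) - rho i j false)
       - (est n (v i j true) - rho i j true)).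
  move=> i; have hm := mean_recon P hX i q0 hb F0; rewrite /mean_vec mxE in hm; rewrite !mxE hm -sumrB.
  apply: eq_bigr => j _; rewrite /v ltn_ord /rho; ring.
rewrite /lqnorm.
under eq_bigr do rewrite E.
have S := le_trans hc hcb.
have qi : 0 < q^-1 by rewrite invr_gt0.
have S0 : 0 <= \sum_(i < d) `|\sum_(j < F) Delta F j * ((est n (v i j false) - rho i j false)
       - (est n (v i j true) - rho i j true))| `^ q.
  by apply: sumr_ge0 => i _; exact: powR_ge0.
have := powR_le (ltW qi) S0 S.
by rewrite -powRrM mulfV ?lt0r_neq0 // powRr1 // ltW.
Qed.
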